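(* Let $\gamma\in(0,1)$, $\mathcal{S}=\{s_0,s_1\}$, $\mathcal{A}=\{a_0,a_1\}$, $d_0=(1/2,1/2)$, and $\mathcal{R}(s,a)=\mathbb{1}\{s=s_0,a=a_0\}+\mathbb{1}\{s=s_1,a=a_1\}$. Let $\hat\Pi=\{\pi_0,\pi_1,\pi_2\}$ where $\pi_0$ plays $a_0$ at both states, $\pi_1$ plays $a_0$ at $s_0$ and $a_1$ at $s_1$, and $\pi_2$ plays $a_1$ at $s_0$ and $a_0$ at $s_1$ (deterministically). Then: (i) for every transition model $\mathcal{T}$, the discounted visit counts $\mathcal{F}^{\pi_0}_{\mathcal{T}},\mathcal{F}^{\pi_1}_{\mathcal{T}},\mathcal{F}^{\pi_2}_{\mathcal{T}}$ are not collinear; (ii) for every transition model $\mathcal{T}$, $\frac{1}{1-\gamma}=J_{\mathcal{T}}(\pi_1)>J_{\mathcal{T}}(\pi_0)>J_{\mathcal{T}}(\pi_2)=0$. Consequently every pair of transition models is equivalent on $\hat\Pi$, so there is no pair of transition models that is non-trivial, non-equivalent and unexploitable on $\hat\Pi$ for this task.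
   Context: Discounted visit counts: $\mathcal{F}^\pi_{\mathcal{T}}(s,a)=\mathbb{E}\big[\sum_{t\ge0}\gamma^t\mathbb{1}(s_t=s,a_t=a)\big]$ with $s_0\sim d_0$, $a_t\sim\pi(\cdot\mid s_t)$, $s_{t+1}\sim\mathcal{T}(\cdot\mid s_t,a_t)$; value $J_{\mathcal{T}}(\pi)=\langle\mathcal{R},\mathcal{F}^\pi_{\mathcal{T}}\rangle$. Collinear means all the vectors lie on a single line in $\mathbb{R}^{|\mathcal{S}||\mathcal{A}|}$. $J$ is trivial on $\Pi$ if constant on $\Pi$; $J_1,J_2$ are equivalent on $\Pi$ if for all $\pi,\pi'\in\Pi$, $J_1(\pi)\ge J_1(\pi')\iff J_2(\pi)\ge J_2(\pi')$. $(\mathcal{T},\mathcal{T}')$ is exploitable relative to $\Pi$ if there are $\pi,\pi'\in\Pi$ with $J_{\mathcal{T}}(\pi)>J_{\mathcal{T}}(\pi')$ and $J_{\mathcal{T}'}(\pi')>J_{\mathcal{T}'}(\pi)$; otherwise unexploitable. A pair of transition models is called non-trivial/non-equivalent on $\Pi$ if both induced value functions are non-trivial on $\Pi$ / they are not equivalent on $\Pi$. *)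

(* Defs.v *)
From Stdlib Require Import Reals.
From Coquelicot Require Import Coquelicot.
Open Scope R_scope.

Inductive state := s0 | s1.
Inductive action := a0 | a1.

Definition sumS (f : state -> R) : R := f s0 + f s1.
Definition sumA (f : action -> R) : R := f a0 + f a1.

(* A transition model T s a s' = probability of moving to s' from s under a. *)
Definition transition := state -> action -> state -> R.
Definition is_transition (T : transition) : Prop :=
  forall s a, (forall s', 0 <= T s a s') /\ sumS (T s a) = 1.

Definition policy := state -> action -> R.

Definition d0 (s : state) : R := 1 / 2.

Definition reward (s : state) (a : action) : R :=
  match s, a with
  | s0, a0 => 1
  | s1, a1 => 1
  | _, _ => 0
  end.

Fixpoint mu (T : transition) (pi : policy) (t : nat) (s' : state) : R :=
  match t with
  | O => d0 s'
  | S t => sumS (fun s => sumA (fun a => mu T pi t s * pi s a * T s a s'))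
  end.

Definition visits (gamma : R) (T : transition) (pi : policy) (s : state) (a : action) : R :=
  Series (fun t => gamma ^ t * (mu T pi t s * pi s a)).

Definition J (gamma : R) (T : transition) (pi : policy) : R :=
  sumS (fun s => sumA (fun a => reward s a * visits gamma T pi s a)).

Definition det (f : state -> action) : policy :=
  fun s a => if (match f s, a with a0, a0 | a1, a1 => true | _, _ => false end) then 1 else 0.

Definition pi0 : policy := det (fun _ => a0).
Definition pi1 : policy := det (fun s => match s with s0 => a0 | s1 => a1 end).
Definition pi2 : policy := det (fun s => match s with s0 => a1 | s1 => a0 end).

Definition Pihat (pi : policy) : Prop := pi = pi0 \/ pi = pi1 \/ pi = pi2.

Definition collinear3 (F1 F2 F3 : state -> action -> R) : Prop :=
  exists (p v : state -> action -> R),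
    forall F, (F = F1 \/ F = F2 \/ F = F3) ->
      exists c : R, forall s a, F s a = p s a + c * v s a.

Definition trivial_on (Pi : policy -> Prop) (Jf : policy -> R) : Prop :=
  forall pi pi', Pi pi -> Pi pi' -> Jf pi = Jf pi'.

Definition equivalent_on (Pi : policy -> Prop) (J1 J2 : policy -> R) : Prop :=
  forall pi pi', Pi pi -> Pi pi' -> (J1 pi >= J1 pi' <-> J2 pi >= J2 pi').

Definition exploitable (gamma : R) (Pi : policy -> Prop) (T T' : transition) : Prop :=
  exists pi pi', Pi pi /\ Pi pi' /\
    J gamma T pi > J gamma T pi' /\ J gamma T' pi' > J gamma T' pi.

(* Main.v *)
Require Import Defs.
From Stdlib Require Import Reals.
From Coquelicot Require Import Coquelicot.
From Stdlib Require Import Lra.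
Open Scope R_scope.

Definition goodpol (pi : policy) : Prop :=
  forall s, 0 <= pi s a0 /\ 0 <= pi s a1 /\ pi s a0 + pi s a1 = 1.

Lemma good0 : goodpol pi0. Proof. intros []; cbn; lra. Qed.
Lemma good1 : goodpol pi1. Proof. intros []; cbn; lra. Qed.
Lemma good2 : goodpol pi2. Proof. intros []; cbn; lra. Qed.

Lemma mu_props T pi : is_transition T -> goodpol pi -> forall t,
  0 <= mu T pi t s0 /\ 0 <= mu T pi t s1 /\ mu T pi t s0 + mu T pi t s1 = 1.
Proof.
  intros HT Hp t. induction t as [|t IH]; cbn.
  - unfold d0; lra.
  - unfold sumS, sumA.
    destruct IH as [I0 [I1 I2]].
    destruct (Hp s0) as [P0 [P1 P2]]. destruct (Hp s1) as [Q0 [Q1 Q2]].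
    destruct (HT s0 a0) as [Ta Ta']. destruct (HT s0 a1) as [Tb Tb'].
    destruct (HT s1 a0) as [Tc Tc']. destruct (HT s1 a1) as [Td Td'].
    unfold sumS in *.
    pose proof (Ta s0); pose proof (Ta s1); pose proof (Tb s0); pose proof (Tb s1);
    pose proof (Tc s0); pose proof (Tc s1); pose proof (Td s0); pose proof (Td s1).
    repeat split.
    + repeat apply Rplus_le_le_0_compat; repeat apply Rmult_le_pos; auto.
    + repeat apply Rplus_le_le_0_compat; repeat apply Rmult_le_pos; auto.
    + replace (T s0 a0 s1) with (1 - T s0 a0 s0) by lra.
      replace (T s0 a1 s1) with (1 - T s0 a1 s0) by lra.
      replace (T s1 a0 s1) with (1 - T s1 a0 s0) by lra.
      replace (T s1 a1 s1) with (1 - T s1 a1 s0) by lra.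
      replace (pi s0 a1) with (1 - pi s0 a0) by lra.
      replace (pi s1 a1) with (1 - pi s1 a0) by lra.
      replace (mu T pi t s1) with (1 - mu T pi t s0) by lra.
      ring.
Qed.

Lemma geom_ex : forall g, 0 < g < 1 -> ex_series (fun n => g ^ n).
Proof. intros g Hg. eexists. apply is_series_geom. rewrite Rabs_pos_eq; lra. Qed.

Lemma ex_term g T pi s a : 0 < g < 1 -> is_transition T -> goodpol pi ->
  ex_series (fun t => g ^ t * (mu T pi t s * pi s a)).
Proof.
  intros Hg HT Hp. apply (@ex_series_le R_AbsRing R_CompleteNormedModule _ (fun n => g ^ n)); [|now apply geom_ex].
  intros n. change norm with Rabs. cbn.
  destruct (mu_props T pi HT Hp n) as [M0 [M1 M2]].
  destruct (Hp s) as [P0 [P1 P2]].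
  assert (0 <= mu T pi n s <= 1) by (destruct s; lra).
  assert (0 <= pi s a <= 1) by (destruct a; lra).
  assert (0 < g ^ n) by (apply pow_lt; lra).
  rewrite Rabs_pos_eq.
  - rewrite <- (Rmult_1_r (g ^ n)) at 2. apply Rmult_le_compat_l; [lra|].
    rewrite <- (Rmult_1_r 1). apply Rmult_le_compat; lra.
  - apply Rmult_le_pos; [lra|]. apply Rmult_le_pos; lra.
Qed.

Lemma Series_zero : Series (fun _ => 0) = 0.
Proof.
  rewrite (Series_ext _ (fun n => 0 * 0)) by (intros; ring).
  rewrite Series_scal_l. ring.
Qed.

Lemma visits_pos g T pi s a : 0 < g < 1 -> is_transition T -> goodpol pi ->
  pi s a = 1 -> 0 < visits g T pi s a.
Proof.
  intros Hg HT Hp H1. unfold visits.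
  rewrite Series_incr_1 by (now apply ex_term).
  cbv beta. change (mu T pi 0 s) with (1/2). rewrite pow_O.
  assert (0 <= Series (fun k => g ^ S k * (mu T pi (S k) s * pi s a))).
  { rewrite <- Series_zero. apply Series_le.
    - intros n. destruct (mu_props T pi HT Hp (S n)) as [M0 [M1 M2]].
      destruct (Hp s) as [P0 [P1 P2]].
      assert (0 <= mu T pi (S n) s) by (destruct s; lra).
      assert (0 <= pi s a) by (destruct a; lra).
      assert (0 < g ^ S n) by (apply pow_lt; lra).
      split; [lra|]. apply Rmult_le_pos; [lra|]. apply Rmult_le_pos; lra.
    - apply (ex_series_incr_1 (fun t => g ^ t * (mu T pi t s * pi s a))).
      now apply ex_term. }
  lra.
Qed.

Lemma visits_zero g T pi s a : pi s a = 0 -> visits g T pi s a = 0.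
Proof.
  intros H. unfold visits. rewrite <- Series_zero. apply Series_ext.
  intros n. rewrite H. ring.
Qed.

Lemma visits_sum g T pi : 0 < g < 1 -> is_transition T -> goodpol pi ->
  forall b0 b1, pi s0 b0 = 1 -> pi s1 b1 = 1 ->
  visits g T pi s0 b0 + visits g T pi s1 b1 = 1 / (1 - g).
Proof.
  intros Hg HT Hp b0 b1 H0 H1. unfold visits.
  rewrite <- Series_plus by (now apply ex_term).
  rewrite (Series_ext _ (fun n => g ^ n)).
  - apply is_series_unique. unfold Rdiv. rewrite Rmult_1_l.
    apply is_series_geom. rewrite Rabs_pos_eq; lra.
  - intros n. rewrite H0, H1. destruct (mu_props T pi HT Hp n) as [_ [_ M]].
    replace (mu T pi n s1) with (1 - mu T pi n s0) by lra. ring.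
Qed.

Lemma Jvals g T : 0 < g < 1 -> is_transition T ->
  1 / (1 - g) = J g T pi1 /\ J g T pi1 > J g T pi0 /\
  J g T pi0 > J g T pi2 /\ J g T pi2 = 0.
Proof.
  intros Hg HT.
  assert (E1 : J g T pi1 = 1 / (1 - g)).
  { unfold J, sumS, sumA. cbn [reward].
    rewrite <- (visits_sum g T pi1 Hg HT good1 a0 a1) by reflexivity. ring. }
  assert (E2 : J g T pi2 = 0).
  { unfold J, sumS, sumA. cbn [reward].
    rewrite (visits_zero g T pi2 s0 a0), (visits_zero g T pi2 s1 a1) by reflexivity. ring. }
  assert (E0 : J g T pi0 = visits g T pi0 s0 a0).
  { unfold J, sumS, sumA. cbn [reward]. rewrite (visits_zero g T pi0 s1 a1) by reflexivity. ring. }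
  pose proof (visits_sum g T pi0 Hg HT good0 a0 a0 eq_refl eq_refl).
  pose proof (visits_pos g T pi0 s0 a0 Hg HT good0 eq_refl).
  pose proof (visits_pos g T pi0 s1 a0 Hg HT good0 eq_refl).
  lra.
Qed.

Theorem mainTheorem5 (gamma : R) (hg0 : 0 < gamma) (hg1 : gamma < 1) :
  (forall T : transition, is_transition T ->
     ~ collinear3 (visits gamma T pi0) (visits gamma T pi1) (visits gamma T pi2)) /\
  (forall T : transition, is_transition T ->
     1 / (1 - gamma) = J gamma T pi1 /\ J gamma T pi1 > J gamma T pi0 /\
     J gamma T pi0 > J gamma T pi2 /\ J gamma T pi2 = 0) /\
  (forall T T' : transition, is_transition T -> is_transition T' ->
     equivalent_on Pihat (J gamma T) (J gamma T')) /\
  ~ (exists T T' : transition, is_transition T /\ is_transition T' /\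
       ~ trivial_on Pihat (J gamma T) /\ ~ trivial_on Pihat (J gamma T') /\
       ~ equivalent_on Pihat (J gamma T) (J gamma T') /\
       ~ exploitable gamma Pihat T T').
Proof.
  assert (Hg : 0 < gamma < 1) by lra.
  assert (EQ : forall T T' : transition, is_transition T -> is_transition T' ->
     equivalent_on Pihat (J gamma T) (J gamma T')).
  { intros T T' HT HT' pi pi' Hpi Hpi'.
    pose proof (Jvals gamma T Hg HT). pose proof (Jvals gamma T' Hg HT').
    destruct Hpi as [ -> | [ -> | -> ] ]; destruct Hpi' as [ -> | [ -> | -> ] ]; split; intro; lra. }
  split; [|split; [|split]].
  - intros T HT [p [v Hc]].
    destruct (Hc _ (or_introl eq_refl)) as [c0 H0].
    destruct (Hc _ (or_intror (or_introl eq_refl))) as [c1 H1].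
    destruct (Hc _ (or_intror (or_intror eq_refl))) as [c2 H2].
    pose proof (visits_zero gamma T pi0 s0 a1 eq_refl) as Z0.
    pose proof (visits_zero gamma T pi1 s0 a1 eq_refl) as Z1.
    pose proof (visits_pos gamma T pi2 s0 a1 Hg HT good2 eq_refl) as P2.
    pose proof (visits_zero gamma T pi0 s1 a1 eq_refl) as Z3.
    pose proof (visits_pos gamma T pi1 s1 a1 Hg HT good1 eq_refl) as P4.
    pose proof (H0 s0 a1) as e0. pose proof (H1 s0 a1) as e1. pose proof (H2 s0 a1) as e2.
    pose proof (H0 s1 a1) as f0. pose proof (H1 s1 a1) as f1.
    assert (Hv : v s0 a1 <> 0) by (intro Hv; rewrite Hv in *; nra).
    assert (Hc01 : c0 = c1).
    { assert ((c0 - c1) * v s0 a1 = 0) by nra.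
      destruct (Rmult_integral _ _ H) as [?|?]; [lra|contradiction]. }
    subst c1. nra.
  - intros T HT. now apply Jvals.
  - exact EQ.
  - intros [T [T' [HT [HT' [_ [_ [HN _]]]]]]]. apply HN. now apply EQ.
Qed.
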